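(* For a meet-semilattice $A$, the following are equivalent: (1) $A$ is proHeyting. (2) $\mathcal{BL}(\mathcal{DM} A) = \mathcal{DM} A$. (3) $\mathrm{p}\mathcal{H}(\mathcal{DM} A) = \mathcal{DM} A$.
   Context: Let $A$ be a meet-semilattice. $\mathcal{DM} A$ is the Dedekind-MacNeille completion of $A$ (the complete lattice of normal ideals $N=N^{u\ell}$ of $A$). A join $\bigvee S$ existing in $A$ is distributive if $a\wedge\bigvee S=\bigvee\{a\wedge s: s\in S\}$ for all $a\in A$; a D-ideal is a downset closed under all distributive joins of its subsets; $\mathcal{BL} A$ (the Bruns-Lakser completion) is the frame of D-ideals of $A$. A relative annihilator of $A$ is a downset $\langle a,b\rangle=\{x\in A: a\wedge x\le b\}$; $\mathcal{R} A$ is the poset of relative annihilators. $A$ is proHeyting if every relative annihilator is a normal ideal. The proHeyting extension $\mathrm{p}\mathcal{H} B$ of a meet-semilattice $B$ is the bounded sublattice of $\mathcal{BL} B$ generated by the relative annihilators of $B$. $A$ is identified with its principal downsets, so $A\le\mathcal{DM} A\le\mathcal{BL} A$; for $A\le B\le\mathcal{BL} A$ one has $\mathcal{BL} B\cong\mathcal{BL} A$, and these are identified (so in particular $\mathcal{BL}(\mathcal{DM} A)=\mathcal{BL} A$), and $\mathcal{R} A$ is identified with its image in $\mathcal{R} B$ via $\langle a,b\rangle_A\mapsto\langle a,b\rangle_B$. *)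

(* Defs.v *)
From mathcomp Require Import all_boot all_order.
Set Implicit Arguments. Unset Strict Implicit. Unset Printing Implicit Defensive.
Import Order.TTheory.

Section Generic.
Variables (X : Type) (le : X -> X -> Prop) (mt : X -> X -> X).

Definition is_lub (S : X -> Prop) (s : X) : Prop :=
  (forall x, S x -> le x s) /\ (forall u, (forall x, S x -> le x u) -> le s u).

Definition distributive_join (S : X -> Prop) (s : X) : Prop :=
  is_lub S s /\
  forall a, is_lub (fun y => exists2 x, S x & y = mt a x) (mt a s).

Definition downset (I : X -> Prop) : Prop :=
  forall x y, le x y -> I y -> I x.

Definition upper (N : X -> Prop) : X -> Prop :=
  fun u => forall x, N x -> le x u.
Definition lower (U : X -> Prop) : X -> Prop :=
  fun x => forall u, U u -> le x u.

Definition normal_ideal (N : X -> Prop) : Prop :=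
  forall x, N x <-> lower (upper N) x.

Definition D_ideal (I : X -> Prop) : Prop :=
  downset I /\
  forall (S : X -> Prop) s, (forall x, S x -> I x) -> distributive_join S s -> I s.

(* principal downset ↓b (the image of X in its Bruns-Lakser completion) *)
Definition principal (I : X -> Prop) : Prop :=
  exists b, forall x, I x <-> le x b.

Definition rel_ann (a b : X) : X -> Prop := fun x => le (mt a x) b.

Definition BL_meet (I J : X -> Prop) : X -> Prop := fun x => I x /\ J x.
Definition BL_join (I J : X -> Prop) : X -> Prop :=
  fun x => forall K, D_ideal K -> (forall y, I y \/ J y -> K y) -> K x.
Definition BL_top : X -> Prop := fun _ => True.
Definition BL_bot : X -> Prop := fun x => forall K, D_ideal K -> K x.

(* pH X: the bounded sublattice of BL X generated by the relative annihilators
   (sets are considered up to extensional equality). *)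
Inductive pH : (X -> Prop) -> Prop :=
  | pH_ann a b : pH (rel_ann a b)
  | pH_top : pH BL_top
  | pH_bot : pH BL_bot
  | pH_meet I J : pH I -> pH J -> pH (BL_meet I J)
  | pH_join I J : pH I -> pH J -> pH (BL_join I J)
  | pH_ext I J : pH I -> (forall x, I x <-> J x) -> pH J.

Lemma normal_ideal_meet N M :
  normal_ideal N -> normal_ideal M -> normal_ideal (fun x => N x /\ M x).
Proof.
move=> hN hM x; split.
  by move=> Hx u Hu; apply: Hu.
move=> Hx; split.
  apply/hN => u Hu; apply: Hx => y [Ny _]; exact: Hu.
apply/hM => u Hu; apply: Hx => y [_ My]; exact: Hu.
Qed.

End Generic.

Definition leA {d} {A : meetSemilatticeType d} (x y : A) : Prop := (x <= y)%O.

Definition proHeyting {d} (A : meetSemilatticeType d) : Prop :=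
  forall a b : A, normal_ideal leA (rel_ann leA Order.meet a b).

Definition DM {d} (A : meetSemilatticeType d) : Type :=
  {N : A -> Prop | normal_ideal leA N}.

Definition leDM {d} {A : meetSemilatticeType d} (N M : DM A) : Prop :=
  forall x, proj1_sig N x -> proj1_sig M x.

Definition meetDM {d} {A : meetSemilatticeType d} (N M : DM A) : DM A :=
  exist _ (fun x => proj1_sig N x /\ proj1_sig M x)
    (normal_ideal_meet (proj2_sig N) (proj2_sig M)).

(* Main.v *)
Require Import Defs.
From mathcomp Require Import all_boot all_order.
Import Order.TTheory.
Local Open Scope order_scope.

Section Gen.
Variables (X : Type) (le : X -> X -> Prop) (mt : X -> X -> X).
Hypothesis le_tr : forall {x y z}, le x y -> le y z -> le x z.
Hypothesis mt_mono : forall a {x y}, le x y -> le (mt a x) (mt a y).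

Lemma principal_D I : principal le I -> D_ideal le mt I.
Proof.
move=> [b Hb]; split.
  by move=> x y lxy /Hb ly; apply/Hb; exact: le_tr lxy ly.
move=> S s HS [[_ Hl] _]; apply/Hb; apply: Hl => x Sx; apply/Hb; exact: HS.
Qed.

Lemma rel_ann_D a b : D_ideal le mt (rel_ann le mt a b).
Proof.
split.
  move=> x y lxy; rewrite /rel_ann => h; exact: le_tr (mt_mono a lxy) h.
move=> S s HS [_ Hd]; have [_ Hl] := Hd a; apply: Hl => y [x Sx ->]; exact: HS.
Qed.

Lemma D_ext I J : D_ideal le mt I -> (forall x, I x <-> J x) -> D_ideal le mt J.
Proof.
move=> [Hd Hc] E; split.
  by move=> x y lxy /E Jy; apply/E; exact: Hd lxy Jy.
move=> S s HS dj; apply/E; apply: Hc dj => x Sx; apply/E; exact: HS.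
Qed.

Lemma pH_D I : pH le mt I -> D_ideal le mt I.
Proof.
elim=> {I}.
- exact: rel_ann_D.
- by split.
- split.
    by move=> x y lxy H K DK; exact: (proj1 DK) lxy (H K DK).
  move=> S s HS dj K DK; apply: (proj2 DK) dj => x Sx; exact: HS.
- move=> I J _ [DI CI] _ [DJ CJ]; split.
    by move=> x y lxy [Iy Jy]; split; [exact: DI lxy Iy|exact: DJ lxy Jy].
  move=> S s HS dj; split; [apply: CI dj => x /HS []|apply: CJ dj => x /HS []] => //.
- move=> I J _ _ _ _; split.
    by move=> x y lxy H K DK HK; exact: (proj1 DK) lxy (H K DK HK).
  move=> S s HS dj K DK HK; apply: (proj2 DK) dj => x Sx; exact: HS.
- move=> I J _ DI E; exact: D_ext DI E.
Qed.
End Gen.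

Section DMsec.
Variables (d : Order.disp_t) (A : meetSemilatticeType d).

Lemma ni_down {N : A -> Prop} {x y} : normal_ideal leA N -> N x -> leA y x -> N y.
Proof.
move=> hN Nx lyx; apply/hN => u Hu; rewrite /leA.
exact: le_trans lyx (Hu x Nx).
Qed.

Lemma ni_lowup (U : A -> Prop) : normal_ideal leA (lower leA (upper leA U)).
Proof.
move=> x; split.
  move=> Hx u Hu; exact: Hu x Hx.
move=> Hx u Hu; apply: Hx => y Hy; exact: Hy u Hu.
Qed.

Lemma ni_princ (a : A) : normal_ideal leA (fun x => leA x a).
Proof.
move=> x; split.
  by move=> Hx u Hu; rewrite /leA; exact: Hu.
move=> Hx; apply: Hx => y Hy; exact: Hy.
Qed.

Lemma ni_top : normal_ideal leA (fun _ : A => True).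
Proof. by move=> x; split=> // _ u Hu; exact: Hu x I. Qed.

Definition pr (a : A) : DM A := exist _ _ (ni_princ a).
Definition topDM : DM A := exist _ _ ni_top.

Lemma ni_ext {N P : A -> Prop} : normal_ideal leA N -> (forall x, N x <-> P x) ->
  normal_ideal leA P.
Proof.
move=> hN E x; split.
  move=> /E /hN Hx u Hu; apply: Hx => y /E; exact: Hu.
move=> Hx; apply/E/hN => u Hu; apply: Hx => y /E; exact: Hu.
Qed.

Lemma main1 (PH : proHeyting A) (I : DM A -> Prop) :
  D_ideal leDM meetDM I -> principal leDM I.
Proof.
move=> DI.
pose U x := exists2 N : DM A, I N & proj1_sig N x.
pose s : DM A := exist _ _ (ni_lowup U).
have lub1 : forall N, I N -> leDM N s.
  by move=> N IN x Nx u Hu; apply: Hu; exists N.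
have lub2 : forall M : DM A, (forall N, I N -> leDM N M) -> leDM s M.
  move=> M HM x Hx; apply/(proj2_sig M x) => u Hu; apply: Hx => y [N IN Ny].
  apply: Hu; exact: HM IN y Ny.
have Is : I s.
  apply: (proj2 DI I s (fun x h => h)); split; first by split.
  move=> a; split.
    move=> y [t It ->] x [ax tx]; split=> //; exact: lub1 It x tx.
  move=> M HM x [ax sx]; apply/(proj2_sig M x) => u Hu.
  pose Rdm : DM A := exist _ _ (PH x u).
  have : leDM s Rdm.
    apply: lub2 => N IN y Ny; rewrite /rel_ann; apply: Hu.
    apply: (HM (meetDM a N)); first by exists N.
    split.
      apply: (ni_down (proj2_sig a) ax); rewrite /leA; exact: leIl.
    idtac.
    apply: (ni_down (proj2_sig N) Ny); exact: leIr.
  move=> /(_ x sx); rewrite /Rdm /= /rel_ann /leA; by rewrite meetxx.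
exists s => N; split; first exact: lub1.
move=> H; exact: (proj1 DI) N s H Is.
Qed.

Lemma main2 :
  (forall a b : A, principal leDM (rel_ann leDM meetDM (pr a) (pr b))) -> proHeyting A.
Proof.
move=> H a b; have [M HM] := H a b.
apply: (ni_ext (proj2_sig M)) => y; split.
  move=> My; rewrite /rel_ann /leA.
  have : rel_ann leDM meetDM (pr a) (pr b) M by apply/HM => z.
  move=> /(_ (a `&` y)) /=; apply; split; first exact: leIl.
  apply: (ni_down (proj2_sig M) My); exact: leIr.
move=> Ry.
have : rel_ann leDM meetDM (pr a) (pr b) (pr y).
  move=> x /= [xa xy]; rewrite /leA; apply: le_trans Ry.
  by rewrite lexI; apply/andP.
move=> /HM /(_ y) /=; apply; exact: lexx.
Qed.

Lemma leDM_tr (x y z : DM A) : leDM x y -> leDM y z -> leDM x z.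
Proof. by move=> h1 h2 u /h1 /h2. Qed.

Lemma meetDM_mono (a x y : DM A) : leDM x y -> leDM (meetDM a x) (meetDM a y).
Proof. by move=> h u [h1 h2]; split=> //; apply: h. Qed.

End DMsec.

Theorem proposition3p12 (d : Order.disp_t) (A : meetSemilatticeType d) :
  (proHeyting A <->
     (forall I : DM A -> Prop, D_ideal leDM meetDM I <-> principal leDM I)) /\
  (proHeyting A <->
     (forall I : DM A -> Prop, pH leDM meetDM I <-> principal leDM I)).
Proof.
have PD := @principal_D _ _ (@meetDM d A) (@leDM_tr d A).
have RD := @rel_ann_D _ _ _ (@leDM_tr d A) (@meetDM_mono d A).
have PHD := @pH_D _ _ _ (@leDM_tr d A) (@meetDM_mono d A).
have Ppr : forall I : DM A -> Prop, principal leDM I -> pH leDM meetDM I.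
  move=> I [b Hb]; apply: (pH_ext (pH_ann _ _ (topDM _ A) b)) => N; split.
    by move=> h; apply/Hb => x Nx; apply: h.
  by move=> /Hb h x [_ Nx]; apply: h.
split; split.
- move=> PH I; split; [exact: main1|exact: PD].
- move=> H; apply: main2 => a b; apply/H; exact: RD.
- move=> PH I; split; [move=> /PHD; exact: main1|exact: Ppr].
- move=> H; apply: main2 => a b; apply/H; exact: pH_ann.
Qed.
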